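(* Consider the NEAR-DGD$^t$ iteration $\mathbf{x}_k=\mathbf{Z}^t\mathbf{y}_k$, $\mathbf{y}_{k+1}=\mathbf{x}_k-\alpha\nabla\mathbf{f}(\mathbf{x}_k)$, $k=0,1,2,\ldots$, with fixed integer $t\ge1$, started from $y_{i,0}=s_0$ for all $i$ (a common point $s_0\in\mathbb{R}^p$). Suppose each $f_i$ is $\mu_i$-strongly convex with $L_i$-Lipschitz gradient, and let $0<\alpha<1/L$ with $L=\max_iL_i$. Then for all $k=1,2,\ldots$, $$\|\mathbf{x}_k\|\le D,\qquad \|\mathbf{y}_k\|\le D,\qquad D=\|\mathbf{y}_0-\mathbf{u}^\star\|+\frac{\nu+4}{\nu}\|\mathbf{u}^\star\|,$$ where $\mathbf{u}^\star=(u_1^\star;\ldots;u_n^\star)$ with $u_i^\star=\arg\min f_i$, $\nu=2\alpha\gamma$, $\gamma=\min_i\gamma_i$, $\gamma_i=\frac{\mu_iL_i}{\mu_i+L_i}$. The same bounds hold for the NEAR-DGD$^+$ iteration $\mathbf{x}_k=\mathbf{Z}^{t(k)}\mathbf{y}_k$, $\mathbf{y}_{k+1}=\mathbf{x}_k-\alpha\nabla\mathbf{f}(\mathbf{x}_k)$ for any sequence of positive integers $t(k)$.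
   Context: $n$ agents with functions $f_i:\mathbb{R}^p\to\mathbb{R}$. $\mathbf{W}$ is a symmetric doubly-stochastic $n\times n$ matrix of a connected network ($w_{ii}>0$, $w_{ij}>0$ iff $i,j$ neighbours), simple eigenvalue $1$, other eigenvalues in $(-1,1)$. $\mathbf{Z}=\mathbf{W}\otimes I_p$. Vectors in $\mathbb{R}^{np}$ are concatenations $\mathbf{x}=(x_1;\ldots;x_n)$, and $\nabla\mathbf{f}(\mathbf{x})=(\nabla f_1(x_1);\ldots;\nabla f_n(x_n))$. *)

(* Defs.v *)
From Stdlib Require Import Reals Lra.
Open Scope R_scope.

(* Vectors of R^p are functions nat -> R; only coordinates 0..p-1 matter. *)
Definition vec := nat -> R.

Fixpoint rsum (m : nat) (F : nat -> R) : R :=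
  match m with O => 0 | S m' => rsum m' F + F m' end.

Definition dot (p : nat) (x y : vec) : R := rsum p (fun l => x l * y l).
Definition vnorm (p : nat) (x : vec) : R := sqrt (dot p x x).
Definition vadd (x y : vec) : vec := fun l => x l + y l.
Definition vsub (x y : vec) : vec := fun l => x l - y l.
Definition vscale (a : R) (x : vec) : vec := fun l => a * x l.

(* Stacked vectors in R^{np}: agent index -> local vector in R^p. *)
Definition snorm (n p : nat) (X : nat -> vec) : R :=
  sqrt (rsum n (fun i => dot p (X i) (X i))).
Definition ssub (X Y : nat -> vec) : nat -> vec := fun i => vsub (X i) (Y i).

(* max / min of F 0, ..., F (n-1)  (intended for n >= 1) *)
Fixpoint rmax_upto (m : nat) (F : nat -> R) : R :=
  match m with O => F O | S m' => Rmax (rmax_upto m' F) (F m) end.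
Fixpoint rmin_upto (m : nat) (F : nat -> R) : R :=
  match m with O => F O | S m' => Rmin (rmin_upto m' F) (F m) end.
Definition rmaxn (n : nat) (F : nat -> R) : R := rmax_upto (n - 1) F.
Definition rminn (n : nat) (F : nat -> R) : R := rmin_upto (n - 1) F.

Definition is_gradient (p : nat) (f : vec -> R) (g : vec -> vec) : Prop :=
  forall x : vec, forall eps : R, 0 < eps -> exists delta : R, 0 < delta /\
    forall h : vec, vnorm p h < delta ->
      Rabs (f (vadd x h) - f x - dot p (g x) h) <= eps * vnorm p h.

Definition strongly_convex (p : nat) (mu : R) (f : vec -> R) : Prop :=
  forall (x y : vec) (th : R), 0 <= th <= 1 ->
    f (vadd (vscale th x) (vscale (1 - th) y))
      <= th * f x + (1 - th) * f y - mu / 2 * th * (1 - th) * (vnorm p (vsub x y))^2.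

Definition lipschitz_grad (p : nat) (L : R) (g : vec -> vec) : Prop :=
  forall x y : vec, vnorm p (vsub (g x) (g y)) <= L * vnorm p (vsub x y).

Inductive reach (n : nat) (W : nat -> nat -> R) (i : nat) : nat -> Prop :=
| reach_refl : reach n W i i
| reach_step : forall j k, reach n W i j -> (j < n)%nat -> (k < n)%nat ->
    0 < W j k -> reach n W i k.

(* W: symmetric doubly stochastic n x n matrix of a connected network,
   w_ii > 0, w_ij > 0 iff i,j neighbours (the network graph is the graph of
   positive entries), eigenvalue 1 simple, all other eigenvalues in (-1,1). *)
Definition mixing_matrix (n : nat) (W : nat -> nat -> R) : Prop :=
  (forall i j, (i < n)%nat -> (j < n)%nat -> W i j = W j i) /\
  (forall i j, (i < n)%nat -> (j < n)%nat -> 0 <= W i j) /\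
  (forall i, (i < n)%nat -> rsum n (fun j => W i j) = 1) /\
  (forall j, (j < n)%nat -> rsum n (fun i => W i j) = 1) /\
  (forall i, (i < n)%nat -> 0 < W i i) /\
  (forall i j, (i < n)%nat -> (j < n)%nat -> reach n W i j) /\
  (forall (lam : R) (v : nat -> R),
      (exists i, (i < n)%nat /\ v i <> 0) ->
      (forall i, (i < n)%nat -> rsum n (fun j => W i j * v j) = lam * v i) ->
      lam = 1 \/ (-1 < lam < 1)) /\
  (forall v : nat -> R,
      (forall i, (i < n)%nat -> rsum n (fun j => W i j * v j) = v i) ->
      forall i j, (i < n)%nat -> (j < n)%nat -> v i = v j).

(* Z X = (W (x) I_p) X, and its powers *)
Definition mix (n : nat) (W : nat -> nat -> R) (X : nat -> vec) : nat -> vec :=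
  fun i l => rsum n (fun j => W i j * X j l).
Fixpoint mixpow (n : nat) (W : nat -> nat -> R) (t : nat) (X : nat -> vec)
  : nat -> vec :=
  match t with O => X | S t' => mix n W (mixpow n W t' X) end.

Fixpoint near_dgd_y (n : nat) (W : nat -> nat -> R) (alpha : R)
  (g : nat -> vec -> vec) (tk : nat -> nat) (s0 : vec) (k : nat) : nat -> vec :=
  match k with
  | O => fun _ => s0
  | S k' =>
      let xk := mixpow n W (tk k') (near_dgd_y n W alpha g tk s0 k') in
      fun i l => xk i l - alpha * g i (xk i) l
  end.
Definition near_dgd_x (n : nat) (W : nat -> nat -> R) (alpha : R)
  (g : nat -> vec -> vec) (tk : nat -> nat) (s0 : vec) (k : nat) : nat -> vec :=
  mixpow n W (tk k) (near_dgd_y n W alpha g tk s0 k).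

(* Main.v *)
Require Import Defs.
From Stdlib Require Import Reals Lra Lia FunctionalExtensionality.
Open Scope R_scope.

Ltac dotind p := unfold dot; generalize p; let q := fresh "q" in intro q; induction q; simpl; [ring| lra].

Lemma rsum_ext m F G : (forall i, (i < m)%nat -> F i = G i) -> rsum m F = rsum m G.
Proof. induction m; simpl; intros H; auto. rewrite IHm by (intros; apply H; lia). rewrite H by lia. auto. Qed.

Lemma rsum_le m F G : (forall i, (i < m)%nat -> F i <= G i) -> rsum m F <= rsum m G.
Proof. induction m; simpl; intros H; [lra|]. assert (F m <= G m) by (apply H; lia).
 assert (rsum m F <= rsum m G) by (apply IHm; intros; apply H; lia). lra. Qed.

Lemma rsum_nonneg m F : (forall i, (i < m)%nat -> 0 <= F i) -> 0 <= rsum m F.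
Proof. intros H. assert (E: rsum m (fun _ => 0) = 0) by (clear H; induction m; simpl; [auto| rewrite IHm; ring]).
 rewrite <- E. apply rsum_le; auto. Qed.

Lemma rsum_lin m a b F G : rsum m (fun l => a * F l + b * G l) = a * rsum m F + b * rsum m G.
Proof. induction m; simpl; [ring|]. rewrite IHm. ring. Qed.

Lemma rsum_plus m F G : rsum m (fun l => F l + G l) = rsum m F + rsum m G.
Proof. induction m; simpl; [ring|]. rewrite IHm. ring. Qed.

Lemma rsum_scal m a F : rsum m (fun l => a * F l) = a * rsum m F.
Proof. induction m; simpl; [ring|]. rewrite IHm. ring. Qed.

Lemma rsum_swap n m (F : nat -> nat -> R) :
  rsum n (fun i => rsum m (fun j => F i j)) = rsum m (fun j => rsum n (fun i => F i j)).
Proof. induction n; simpl.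
 - induction m; simpl; auto. rewrite <- IHm. ring.
 - rewrite IHn. rewrite <- rsum_plus. auto. Qed.

Lemma cs_gen xx xy yy : (forall t, 0 <= t*t*xx - 2*t*xy + yy) -> xy*xy <= xx*yy.
Proof. intros H.
 destruct (Req_dec xx 0) as [E|E].
 - rewrite E in H. destruct (Req_dec xy 0) as [E2|E2]. subst; nra.
   specialize (H ((yy+1)/(2*xy))).
   replace ((yy + 1) / (2 * xy) * ((yy + 1) / (2 * xy)) * 0 - 2 * ((yy + 1) / (2 * xy)) * xy + yy) with (-1) in H by (field; auto). lra.
 - assert (0 <= xx). { pose proof (H 0) as H0. 
   destruct (Rle_lt_dec 0 xx); auto. exfalso.
   set (t := (yy+1)/(-xx) + 1). pose proof (H t) as H1. pose proof (H (-t)) as H2.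
   assert (Ht: (t - 1) * (-xx) = yy + 1) by (unfold t; field; lra).
   assert (1 <= t). { unfold t. assert (0 <= (yy+1)/(-xx)). unfold Rdiv; apply Rmult_le_pos; [lra| apply Rlt_le, Rinv_0_lt_compat; lra]. lra. }
   nra. }
   specialize (H (xy/xx)). assert (0 < xx) by lra.
   replace (xy / xx * (xy / xx) * xx - 2 * (xy / xx) * xy + yy) with ((xx*yy - xy*xy)/xx) in H by (field; lra).
   apply Rmult_le_compat_r with (r:=xx) in H; [|lra]. unfold Rdiv in H. rewrite Rmult_assoc, Rinv_l, Rmult_1_r in H; lra.
Qed.



Lemma dot_sym p x y : dot p x y = dot p y x.
Proof. dotind p. Qed.
Lemma dot_add_l p x y z : dot p (vadd x y) z = dot p x z + dot p y z.
Proof. unfold vadd; dotind p. Qed.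
Lemma dot_sub_l p x y z : dot p (vsub x y) z = dot p x z - dot p y z.
Proof. unfold vsub; dotind p. Qed.
Lemma dot_scale_l p a x z : dot p (vscale a x) z = a * dot p x z.
Proof. unfold vscale; dotind p. Qed.
Lemma dot_add_r p x y z : dot p z (vadd x y) = dot p z x + dot p z y.
Proof. unfold vadd; dotind p. Qed.
Lemma dot_sub_r p x y z : dot p z (vsub x y) = dot p z x - dot p z y.
Proof. unfold vsub; dotind p. Qed.
Lemma dot_scale_r p a x z : dot p z (vscale a x) = a * dot p z x.
Proof. unfold vscale; dotind p. Qed.
Lemma dot_nonneg p x : 0 <= dot p x x.
Proof. unfold dot; apply rsum_nonneg; intros; nra. Qed.
Lemma dot_p0 x y : dot 0 x y = 0.
Proof. reflexivity. Qed.

Lemma cs_dot p x y : dot p x y * dot p x y <= dot p x x * dot p y y.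
Proof. apply cs_gen. intros t.
 replace (t*t*dot p x x - 2*t*dot p x y + dot p y y) with
   (dot p (vsub (vscale t x) y) (vsub (vscale t x) y)).
 apply dot_nonneg. unfold vsub, vscale; dotind p. Qed.

Lemma le_sqrt_prod c A B : 0 <= A -> 0 <= B -> c * c <= A * B -> c <= sqrt A * sqrt B.
Proof. intros HA HB H. rewrite <- sqrt_mult by auto.
 apply Rle_trans with (Rabs c); [apply Rle_abs|].
 rewrite <- sqrt_Rsqr_abs. apply sqrt_le_1_alt. unfold Rsqr; auto. Qed.

Lemma cs_norm p x y : dot p x y <= vnorm p x * vnorm p y.
Proof. unfold vnorm. apply le_sqrt_prod; try apply dot_nonneg. apply cs_dot. Qed.

Lemma dot_zero_l p x y : dot p x x = 0 -> dot p x y = 0.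
Proof. intros H. pose proof (cs_dot p x y). rewrite H in H0. nra. Qed.

Lemma vnorm_sq p x : vnorm p x ^ 2 = dot p x x.
Proof. unfold vnorm. rewrite <- Rsqr_pow2. apply Rsqr_sqrt, dot_nonneg. Qed.

Lemma vnorm_nonneg p x : 0 <= vnorm p x.
Proof. apply sqrt_pos. Qed.

Lemma vnorm_scale p a x : vnorm p (vscale a x) = Rabs a * vnorm p x.
Proof. unfold vnorm. rewrite dot_scale_l, dot_sym, dot_scale_l, <- Rmult_assoc.
 rewrite sqrt_mult by (try apply dot_nonneg; nra). f_equal.
 rewrite <- sqrt_Rsqr_abs. reflexivity. Qed.

Lemma lip_sq p L g x y : 0 <= L -> lipschitz_grad p L g ->
  dot p (vsub (g x) (g y)) (vsub (g x) (g y)) <= L * L * dot p (vsub x y) (vsub x y).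
Proof. intros HL H. specialize (H x y). rewrite <- !vnorm_sq.
 pose proof (vnorm_nonneg p (vsub (g x) (g y))). nra. Qed.

Definition sdot n p (X Y : nat -> vec) := rsum n (fun i => dot p (X i) (Y i)).

Lemma sdot_nonneg n p X : 0 <= sdot n p X X.
Proof. apply rsum_nonneg; intros; apply dot_nonneg. Qed.

Lemma cs_sdot n p X Y : sdot n p X Y * sdot n p X Y <= sdot n p X X * sdot n p Y Y.
Proof. apply cs_gen. intros t.
 replace (t*t*sdot n p X X - 2*t*sdot n p X Y + sdot n p Y Y) with
   (sdot n p (fun i => vsub (vscale t (X i)) (Y i)) (fun i => vsub (vscale t (X i)) (Y i))).
 apply sdot_nonneg. unfold sdot. induction n; simpl; [ring|].
 rewrite IHn. rewrite !dot_sub_l, !dot_sub_r, !dot_scale_l, !dot_scale_r.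
 rewrite (dot_sym p (Y n) (X n)). ring. Qed.

Lemma snorm_triangle n p X Y :
  snorm n p (fun i l => X i l + Y i l) <= snorm n p X + snorm n p Y.
Proof. unfold snorm. fold (sdot n p X X). fold (sdot n p Y Y).
 change (rsum n (fun i => dot p (fun l => X i l + Y i l) (fun l => X i l + Y i l)))
   with (sdot n p (fun i => vadd (X i) (Y i)) (fun i => vadd (X i) (Y i))).
 assert (E: sdot n p (fun i => vadd (X i) (Y i)) (fun i => vadd (X i) (Y i)) =
   sdot n p X X + 2 * sdot n p X Y + sdot n p Y Y).
 { unfold sdot. induction n; simpl; [ring|]. rewrite IHn.
   rewrite !dot_add_l, !dot_add_r. rewrite (dot_sym p (Y n) (X n)). ring. }
 rewrite E. pose proof (sdot_nonneg n p X). pose proof (sdot_nonneg n p Y).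
 pose proof (le_sqrt_prod _ _ _ H H0 (cs_sdot n p X Y)).
 pose proof (sqrt_pos (sdot n p X X)). pose proof (sqrt_pos (sdot n p Y Y)).
 rewrite <- (sqrt_square (sqrt _ + sqrt _)) by lra. apply sqrt_le_1_alt.
 replace ((sqrt (sdot n p X X) + sqrt (sdot n p Y Y)) * (sqrt (sdot n p X X) + sqrt (sdot n p Y Y)))
  with (sqrt (sdot n p X X) * sqrt (sdot n p X X) + 2 * (sqrt (sdot n p X X) * sqrt (sdot n p Y Y))
       + sqrt (sdot n p Y Y) * sqrt (sdot n p Y Y)) by ring.
 rewrite !sqrt_sqrt by auto. lra. Qed.

Lemma snorm_opp n p X : snorm n p (fun i l => - X i l) = snorm n p X.
Proof. unfold snorm. f_equal. apply rsum_ext. intros. unfold dot. apply rsum_ext. intros; ring. Qed.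



Lemma sc_first p mu f g x z : is_gradient p f g -> strongly_convex p mu f -> 0 <= mu ->
  f x + dot p (g x) (vsub z x) + mu / 2 * dot p (vsub z x) (vsub z x) <= f z.
Proof. intros Hg Hs Hmu.
 set (d := vsub z x). set (Nd := dot p d d). set (nd := vnorm p d).
 assert (HNd: 0 <= Nd) by apply dot_nonneg. assert (Hnd: 0 <= nd) by apply vnorm_nonneg.
 destruct (Rle_lt_dec (f x + dot p (g x) d + mu / 2 * Nd) (f z)) as [|Hlt]; auto. exfalso.
 set (d0 := f x + dot p (g x) d + mu / 2 * Nd - f z).
 assert (Hd0: 0 < d0) by (unfold d0; lra).
 set (eps := d0 / (2 * (nd + 1))).
 assert (Heps: 0 < eps) by (unfold eps; apply Rdiv_lt_0_compat; lra).
 destruct (Hg x eps Heps) as [del [Hdel Hh]].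
 set (th := Rmin (1/2) (Rmin (del / (2*(nd+1))) (d0 / (2*(mu*Nd+1))))).
 assert (Hmn: 0 <= mu * Nd) by nra.
 assert (Hth1: 0 < th). { unfold th. apply Rmin_glb_lt; [lra|]. apply Rmin_glb_lt;
   apply Rdiv_lt_0_compat; nra. }
 assert (Hth2: th <= 1/2) by (unfold th; apply Rmin_l).
 assert (Hth3: th <= del / (2*(nd+1))) by (unfold th; eapply Rle_trans; [apply Rmin_r| apply Rmin_l]).
 assert (Hth4: th <= d0 / (2*(mu*Nd+1))) by (unfold th; eapply Rle_trans; [apply Rmin_r| apply Rmin_r]).
 assert (A1: th * nd < del).
 { apply Rle_lt_trans with (del / (2*(nd+1)) * nd). apply Rmult_le_compat_r; lra.
   apply Rmult_lt_reg_r with (2*(nd+1)); [lra|]. unfold Rdiv.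
   replace (del * / (2 * (nd + 1)) * nd * (2 * (nd + 1))) with (del * nd) by (field; lra). nra. }
 assert (A2: th * (mu * Nd) <= d0 / 2).
 { apply Rle_trans with (d0 / (2*(mu*Nd+1)) * (mu*Nd)). apply Rmult_le_compat_r; lra.
   apply Rmult_le_reg_r with (2*(mu*Nd+1)); [lra|]. unfold Rdiv.
   replace (d0 * / (2 * (mu * Nd + 1)) * (mu * Nd) * (2 * (mu * Nd + 1))) with (d0 * (mu*Nd)) by (field; lra). nra. }
 assert (A3: eps * nd < d0 / 2).
 { unfold eps. apply Rmult_lt_reg_r with (2*(nd+1)); [lra|]. unfold Rdiv.
   replace (d0 * / (2 * (nd + 1)) * nd * (2 * (nd + 1))) with (d0 * nd) by (field; lra). nra. }
 set (h := vscale th d).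
 assert (Hvh: vnorm p h = th * nd) by (unfold h, nd; rewrite vnorm_scale, Rabs_right; lra).
 specialize (Hh h). rewrite Hvh in Hh. specialize (Hh A1).
 assert (Hdh: dot p (g x) h = th * dot p (g x) d) by (unfold h; apply dot_scale_r).
 rewrite Hdh in Hh. apply Rabs_le_between' in Hh || idtac.
 specialize (Hs z x th ltac:(lra)).
 assert (E: vadd (vscale th z) (vscale (1 - th) x) = vadd x h).
 { apply functional_extensionality; intro l. unfold h, d. unfold vadd, vscale, vsub. ring. }
 rewrite E in Hs. fold d in Hs. rewrite vnorm_sq in Hs. fold Nd in Hs.
 pose proof (Rle_abs (f (vadd x h) - f x - th * dot p (g x) d)) as Ab.
 pose proof (Rle_abs (-(f (vadd x h) - f x - th * dot p (g x) d))) as Ab2. rewrite Rabs_Ropp in Ab2.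
 (* th*dot - eps th nd <= f(x+h) - f x <= th (fz - fx) - mu/2 th (1-th) Nd *)
 assert (K: th * d0 <= th * (mu / 2 * th * Nd + eps * nd)).
 { unfold d0. nra. }
 apply Rmult_le_reg_l in K; [|lra]. nra.
Qed.


Lemma descent p mu L f g x z : is_gradient p f g -> strongly_convex p mu f -> 0 <= mu ->
  0 <= L -> lipschitz_grad p L g ->
  f z <= f x + dot p (g x) (vsub z x) + L / 2 * dot p (vsub z x) (vsub z x).
Proof. intros Hg Hs Hmu HL Hl.
 set (d := vsub z x). set (Nd := dot p d d). set (nd := vnorm p d). set (gd := dot p (g x) d).
 assert (HNd: 0 <= Nd) by apply dot_nonneg. assert (Hnd: 0 <= nd) by apply vnorm_nonneg.
 assert (Hndsq: nd * nd = Nd) by (unfold nd, Nd; rewrite <- vnorm_sq; ring).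
 assert (Main: forall N, (0 < N)%nat -> f z <= f x + gd + L/2*Nd + L*Nd/(2 * INR N)).
 { intros N HN. set (r := INR N). assert (Hr: 0 < r) by (apply lt_0_INR; auto).
   set (pts := fun k : nat => vadd x (vscale (INR k / r) d)).
   assert (P: forall K, f (pts K) <= f x + INR K / r * gd + L * Nd * (INR K * (INR K + 1)) / (2 * r * r)).
   { induction K.
     - assert (E: pts 0%nat = x). { apply functional_extensionality; intro l. unfold pts, vadd, vscale. simpl. field; lra. }
       rewrite E. simpl. unfold Rdiv. lra.
     - pose proof (sc_first p mu f g (pts (S K)) (pts K) Hg Hs Hmu) as S1.
       assert (E1: vsub (pts K) (pts (S K)) = vscale (-1 / r) d).
       { apply functional_extensionality; intro l. unfold pts, vadd, vscale, vsub. rewrite S_INR. field; lra. }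
       rewrite E1 in S1. rewrite dot_scale_r in S1.
       assert (S2: 0 <= mu / 2 * dot p (vscale (-1 / r) d) (vscale (-1 / r) d)).
       { apply Rmult_le_pos; [lra| apply dot_nonneg]. }
       assert (E2: dot p (g (pts (S K))) d = gd + dot p (vsub (g (pts (S K))) (g x)) d).
       { unfold gd. rewrite dot_sub_l. ring. }
       pose proof (cs_norm p (vsub (g (pts (S K))) (g x)) d) as C.
       pose proof (Hl (pts (S K)) x) as Lp.
       assert (E3: vsub (pts (S K)) x = vscale (INR (S K) / r) d).
       { apply functional_extensionality; intro l. unfold pts, vadd, vscale, vsub. ring. }
       rewrite E3, vnorm_scale, Rabs_right in Lp.
       2:{ apply Rle_ge, Rmult_le_pos; [apply pos_INR| apply Rlt_le, Rinv_0_lt_compat; auto]. }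
       fold nd in Lp, C.
       assert (B: dot p (g (pts (S K))) d <= gd + L * (INR (S K) / r * nd) * nd).
       { rewrite E2. apply Rplus_le_compat_l. eapply Rle_trans; [apply C|].
         apply Rmult_le_compat_r; auto. }
       rewrite S_INR in B |- *.
       assert (B2: f (pts (S K)) <= f (pts K) + 1 / r * (gd + L * ((INR K + 1) / r * nd) * nd)).
       { assert (-1/r * dot p (g (pts (S K))) d >= -1/r * (gd + L * ((INR K + 1) / r * nd) * nd)).
         { apply Rle_ge. replace (-1/r) with (-(1/r)) by (field; lra).
           rewrite !Ropp_mult_distr_l_reverse. apply Ropp_le_contravar.
           apply Rmult_le_compat_l; auto. apply Rlt_le, Rdiv_lt_0_compat; lra. }
         replace (1 / r * (gd + L * ((INR K + 1) / r * nd) * nd)) with (- (-1/r * (gd + L * ((INR K + 1) / r * nd) * nd))) by (field; lra).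
         lra. }
       eapply Rle_trans; [apply B2|].
       replace (1 / r * (gd + L * ((INR K + 1) / r * nd) * nd)) with (1/r*gd + L * Nd * (INR K + 1) / (r*r)) by (rewrite <- Hndsq; field; lra).
       replace ((INR K + 1) / r * gd) with (INR K / r * gd + 1/r*gd) by (field; lra).
       replace (L * Nd * ((INR K + 1) * (INR K + 1 + 1)) / (2 * r * r)) with
        (L * Nd * (INR K * (INR K + 1)) / (2 * r * r) + L * Nd * (INR K + 1) / (r*r)) by (field; lra).
       lra. }
   specialize (P N).
   assert (E: pts N = z). { apply functional_extensionality; intro l. unfold pts, vadd, vscale, d, vsub. fold r. field. lra. }
   rewrite E in P. fold r in P.
   replace (L * Nd * (r * (r + 1)) / (2 * r * r)) with (L/2*Nd + L*Nd/(2*r)) in P by (field; lra). replace (r / r * gd) with gd in P by (field; lra). lra. }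
 destruct (Rle_lt_dec (f z) (f x + gd + L/2*Nd)) as [|Hlt]; auto. exfalso.
 set (d0 := f z - (f x + gd + L/2*Nd)).
 assert (Hd0: 0 < d0) by (unfold d0; lra).
 destruct (archimed_cor1 (d0 / (L*Nd/2+1))) as [N [HN1 HN2]].
 { apply Rdiv_lt_0_compat; nra. }
 specialize (Main N HN2). assert (Hr: 0 < INR N) by (apply lt_0_INR; auto).
 assert (L*Nd/(2*INR N) < d0).
 { assert (0 <= L*Nd) by nra.
   apply Rle_lt_trans with ((L*Nd/2+1) * / INR N).
   { unfold Rdiv. rewrite Rinv_mult. assert (0 < / INR N) by (apply Rinv_0_lt_compat; auto). nra. }
   apply Rmult_lt_reg_l with (/ (L*Nd/2+1)). apply Rinv_0_lt_compat; lra.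
   rewrite <- Rmult_assoc, Rinv_l by lra. unfold Rdiv in HN1 |- *. lra. }
 unfold d0 in *. lra.
Qed.



Section S.
Variables (p : nat) (mu L : R) (f : vec -> R) (g : vec -> vec).
Hypotheses (Hg : is_gradient p f g) (Hs : strongly_convex p mu f) (Hmu : 0 < mu)
  (HL : 0 < L) (Hl : lipschitz_grad p L g).

Lemma grad_min u : (forall z, f u <= f z) -> dot p (g u) (g u) = 0.
Proof. intros Hm. set (z := vsub u (vscale (1/L) (g u))).
 pose proof (descent p mu L f g u z Hg Hs ltac:(lra) ltac:(lra) Hl) as D.
 assert (E: vsub z u = vscale (-(1/L)) (g u)).
 { apply functional_extensionality; intro l. unfold z, vsub, vscale. ring. }
 rewrite E, dot_scale_r, dot_scale_l, dot_scale_r in D.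
 specialize (Hm z). pose proof (dot_nonneg p (g u)).
 set (G := dot p (g u) (g u)) in *.
 assert (G / (2*L) <= 0).
 { replace (G/(2*L)) with (-(- (1/L) * G + L / 2 * (- (1 / L) * (- (1 / L) * G)))) by (field; lra). lra. }
 assert (0 <= G / (2*L)) by (apply Rmult_le_pos; [lra| apply Rlt_le, Rinv_0_lt_compat; lra]).
 assert (G / (2*L) = 0) by lra.
 replace G with (G/(2*L) * (2*L)) by (field; lra). rewrite H2. ring. Qed.

Lemma mu_le_L : (1 <= p)%nat -> mu <= L.
Proof. intros Hp. set (x := fun _ : nat => 0). set (z := fun _ : nat => 1).
 pose proof (descent p mu L f g x z Hg Hs ltac:(lra) ltac:(lra) Hl) as D.
 pose proof (sc_first p mu f g x z Hg Hs ltac:(lra)) as S1.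
 assert (P: 0 < dot p (vsub z x) (vsub z x)).
 { destruct p as [|q]; [lia|]. unfold dot; simpl.
   assert (E1: vsub z x q = 1) by (unfold vsub, z, x; ring). rewrite E1.
   assert (0 <= rsum q (fun l => vsub z x l * vsub z x l)) by (apply rsum_nonneg; intros; nra). lra. }
 nra. Qed.

Definition phi w := f w - mu / 2 * dot p w w.
Definition gphi w := vsub (g w) (vscale mu w).

Lemma phi_sc x z : phi x + dot p (gphi x) (vsub z x) <= phi z.
Proof. pose proof (sc_first p mu f g x z Hg Hs ltac:(lra)) as S1. unfold phi, gphi.
 assert (E: dot p z z = dot p x x + 2 * dot p x (vsub z x) + dot p (vsub z x) (vsub z x))
   by (unfold vsub; dotind p).
 assert (E2: dot p (vsub (g x) (vscale mu x)) (vsub z x) = dot p (g x) (vsub z x) - mu * dot p x (vsub z x))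
   by (unfold vsub, vscale; dotind p).
 rewrite E, E2. lra. Qed.

Lemma phi_dl x z : phi z <= phi x + dot p (gphi x) (vsub z x) + (L - mu) / 2 * dot p (vsub z x) (vsub z x).
Proof. pose proof (descent p mu L f g x z Hg Hs ltac:(lra) ltac:(lra) Hl) as S1. unfold phi, gphi.
 assert (E: dot p z z = dot p x x + 2 * dot p x (vsub z x) + dot p (vsub z x) (vsub z x))
   by (unfold vsub; dotind p).
 assert (E2: dot p (vsub (g x) (vscale mu x)) (vsub z x) = dot p (g x) (vsub z x) - mu * dot p x (vsub z x))
   by (unfold vsub, vscale; dotind p).
 rewrite E, E2. lra. Qed.

Lemma coco_t x y t : let b := vsub (gphi y) (gphi x) in
  t * (2 - (L - mu) * t) * dot p b b <= dot p b (vsub y x).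
Proof. intros b. set (M := L - mu).
 set (z := vsub y (vscale t b)). set (z' := vsub x (vscale t (vsub (gphi x) (gphi y)))).
 pose proof (phi_sc x z) as A1. pose proof (phi_dl y z) as A2.
 pose proof (phi_sc y z') as A3. pose proof (phi_dl x z') as A4.
 fold M in A2, A4.
 assert (I1: dot p (gphi x) (vsub z x) = dot p (gphi x) (vsub y x) - t * dot p (gphi x) b)
   by (unfold z, b, vsub, vscale; dotind p).
 assert (I2: dot p (gphi y) (vsub z y) = - t * dot p (gphi y) b)
   by (unfold z, b, vsub, vscale; dotind p).
 assert (I3: dot p (vsub z y) (vsub z y) = t * t * dot p b b)
   by (unfold z, b, vsub, vscale; dotind p).
 assert (I4: dot p (gphi y) (vsub z' y) = - dot p (gphi y) (vsub y x) + t * dot p (gphi y) b)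
   by (unfold z', b, vsub, vscale; dotind p).
 assert (I5: dot p (gphi x) (vsub z' x) = t * dot p (gphi x) b)
   by (unfold z', b, vsub, vscale; dotind p).
 assert (I6: dot p (vsub z' x) (vsub z' x) = t * t * dot p b b)
   by (unfold z', b, vsub, vscale; dotind p).
 assert (I7: dot p b (vsub y x) = dot p (gphi y) (vsub y x) - dot p (gphi x) (vsub y x))
   by (unfold b, vsub, vscale; dotind p).
 assert (I8: dot p b b = dot p (gphi y) b - dot p (gphi x) b)
   by (unfold b, vsub, vscale; dotind p).
 rewrite I1 in A1. rewrite I2, I3 in A2. rewrite I4 in A3. rewrite I5, I6 in A4.
 rewrite I7. rewrite I8 in A2, A4 |- *. unfold M in *. lra. Qed.

Lemma coco x y : (1 <= p)%nat ->
  dot p (vsub (g y) (g x)) (vsub (g y) (g x)) + mu * L * dot p (vsub y x) (vsub y x)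
  <= (L + mu) * dot p (vsub (g y) (g x)) (vsub y x).
Proof. intros Hp. pose proof (mu_le_L Hp) as HmL.
 set (b := vsub (gphi y) (gphi x)).
 assert (K: (L - mu) * dot p b (vsub y x) >= dot p b b).
 { pose proof (dot_nonneg p b).
   destruct (Req_dec (L - mu) 0) as [E|E].
   - rewrite E. destruct (Req_dec (dot p b b) 0) as [E2|E2]; [rewrite E2; lra|].
     exfalso. pose proof (coco_t x y ((Rabs (dot p b (vsub y x)) + 1) / dot p b b)) as C.
     cbv zeta in C; fold b in C. rewrite E in C.
     replace ((Rabs (dot p b (vsub y x)) + 1) / dot p b b * (2 - 0 * ((Rabs (dot p b (vsub y x)) + 1) / dot p b b)) * dot p b b)
       with (2 * (Rabs (dot p b (vsub y x)) + 1)) in C by (field; auto).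
     pose proof (Rle_abs (dot p b (vsub y x))). pose proof (Rabs_pos (dot p b (vsub y x))). lra.
   - pose proof (coco_t x y (1 / (L - mu))) as C. cbv zeta in C; fold b in C.
     replace (1 / (L - mu) * (2 - (L - mu) * (1 / (L - mu))) * dot p b b) with (dot p b b / (L - mu)) in C by (field; auto).
     apply Rle_ge. apply Rmult_le_compat_l with (r := L - mu) in C; [|lra].
     replace ((L - mu) * (dot p b b / (L - mu))) with (dot p b b) in C by (field; auto). lra. }
 assert (J1: dot p b (vsub y x) = dot p (vsub (g y) (g x)) (vsub y x) - mu * dot p (vsub y x) (vsub y x))
   by (unfold b, gphi, vsub, vscale; dotind p).
 assert (J2: dot p b b = dot p (vsub (g y) (g x)) (vsub (g y) (g x)) - 2 * mu * dot p (vsub (g y) (g x)) (vsub y x) + mu * mu * dot p (vsub y x) (vsub y x))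
   by (unfold b, gphi, vsub, vscale; dotind p).
 rewrite J1, J2 in K. lra. Qed.

Lemma contraction u x alpha : (forall z, f u <= f z) -> 0 < alpha -> alpha * L < 1 ->
  dot p (vsub (fun l => x l - alpha * g x l) u) (vsub (fun l => x l - alpha * g x l) u)
  <= (1 - 2 * alpha * (mu * L / (mu + L))) * dot p (vsub x u) (vsub x u).
Proof. intros Hm Ha HaL. destruct (Nat.eq_dec p 0) as [Ep|Ep].
 - rewrite Ep, !dot_p0. lra.
 - assert (Hp: (1 <= p)%nat) by lia.
   pose proof (grad_min u Hm) as G0.
   pose proof (coco u x Hp) as C. pose proof (mu_le_L Hp).
   assert (Z1: dot p (g u) (vsub x u) = 0) by (apply dot_zero_l; auto).
   assert (Z2: dot p (g u) (g x) = 0) by (apply dot_zero_l; auto).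
   assert (J1: dot p (vsub (g x) (g u)) (vsub (g x) (g u)) = dot p (g x) (g x) - 2 * dot p (g u) (g x) + dot p (g u) (g u))
     by (unfold vsub; dotind p).
   assert (J2: dot p (vsub (g x) (g u)) (vsub x u) = dot p (g x) (vsub x u) - dot p (g u) (vsub x u))
     by (unfold vsub; dotind p).
   assert (J3: dot p (vsub (fun l => x l - alpha * g x l) u) (vsub (fun l => x l - alpha * g x l) u)
     = dot p (vsub x u) (vsub x u) - 2 * alpha * dot p (g x) (vsub x u) + alpha * alpha * dot p (g x) (g x))
     by (unfold vsub; dotind p).
   rewrite J1, J2, Z1, Z2, G0 in C. rewrite J3.
   set (DD := dot p (vsub x u) (vsub x u)) in *. set (gD := dot p (g x) (vsub x u)) in *.
   set (gg := dot p (g x) (g x)) in *.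
   assert (Hgg: 0 <= gg) by apply dot_nonneg.
   assert (Hs': 0 < mu + L) by lra.
   replace (1 - 2 * alpha * (mu * L / (mu + L))) with ((mu + L - 2 * alpha * mu * L) / (mu + L)) by (field; lra).
   apply Rmult_le_reg_r with (mu + L); [lra|].
   replace ((mu + L - 2 * alpha * mu * L) / (mu + L) * DD * (mu + L)) with ((mu + L - 2 * alpha * mu * L) * DD) by (field; lra).
   assert (A: 2 * alpha * (gg + mu * L * DD) <= 2 * alpha * ((L + mu) * gD)) by (apply Rmult_le_compat_l; lra).
   assert (B: 0 <= alpha * gg * (2 - alpha * (mu + L))).
   { apply Rmult_le_pos; [apply Rmult_le_pos; lra|]. nra. }
   nra.
Qed.
End S.


Lemma rmax_upto_ge m F i : (i <= m)%nat -> F i <= rmax_upto m F.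
Proof. induction m; intros H; simpl.
 - replace i with 0%nat by lia. lra.
 - destruct (Nat.eq_dec i (S m)) as [->|Hne]; [apply Rmax_r|].
   eapply Rle_trans; [apply IHm; lia| apply Rmax_l]. Qed.

Lemma rmin_upto_le m F i : (i <= m)%nat -> rmin_upto m F <= F i.
Proof. induction m; intros H; simpl.
 - replace i with 0%nat by lia. lra.
 - destruct (Nat.eq_dec i (S m)) as [->|Hne]; [apply Rmin_r|].
   eapply Rle_trans; [apply Rmin_l| apply IHm; lia]. Qed.

Lemma rmin_upto_pos m F : (forall i, (i <= m)%nat -> 0 < F i) -> 0 < rmin_upto m F.
Proof. induction m; intros H; simpl. apply H; lia.
 apply Rmin_glb_lt. apply IHm; intros; apply H; lia. apply H; lia. Qed.

Lemma jensen m (w a : nat -> R) : (forall j, (j < m)%nat -> 0 <= w j) -> rsum m w = 1 ->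
  rsum m (fun j => w j * a j) * rsum m (fun j => w j * a j) <= rsum m (fun j => w j * (a j * a j)).
Proof. intros Hw H1. set (s := rsum m (fun j => w j * a j)).
 assert (E: rsum m (fun j => w j * ((a j - s) * (a j - s))) =
   rsum m (fun j => w j * (a j * a j)) - 2 * s * rsum m (fun j => w j * a j) + s * s * rsum m w).
 { clearbody s. clear Hw H1. induction m; simpl; [ring| ]. rewrite IHm. ring. }
 assert (0 <= rsum m (fun j => w j * ((a j - s) * (a j - s)))).
 { apply rsum_nonneg; intros. apply Rmult_le_pos; [apply Hw; auto| apply Rle_0_sqr]. }
 rewrite H1 in E. fold s in E. lra. Qed.

Definition SN n p X := rsum n (fun i => dot p (X i) (X i)).

Lemma mix_nonexp n p W X : mixing_matrix n W -> SN n p (mix n W X) <= SN n p X.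
Proof. intros (Hsym & Hpos & Hrow & Hcol & _).
 unfold SN, dot, mix.
 apply Rle_trans with (rsum n (fun i => rsum p (fun l => rsum n (fun j => W i j * (X j l * X j l))))).
 { apply rsum_le; intros i Hi. apply rsum_le; intros l Hl. apply jensen.
   intros; apply Hpos; auto. apply Hrow; auto. }
 rewrite (rsum_ext n _ (fun i => rsum n (fun j => rsum p (fun l => W i j * (X j l * X j l))))).
 2:{ intros i Hi. apply rsum_swap. }
 rewrite rsum_swap. apply Req_le. apply rsum_ext; intros j Hj.
 rewrite rsum_swap.
 transitivity (rsum p (fun l => rsum n (fun i => W i j) * (X j l * X j l))).
 { apply rsum_ext; intros l Hl. rewrite (Rmult_comm (rsum n (fun i => W i j))), <- rsum_scal. apply rsum_ext; intros; ring. }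
 rewrite Hcol by auto. apply rsum_ext; intros; ring. Qed.

Lemma mixpow_nonexp n p W t X : mixing_matrix n W -> SN n p (mixpow n W t X) <= SN n p X.
Proof. intros HW. induction t; simpl. lra. eapply Rle_trans; [apply mix_nonexp; auto| auto]. Qed.

Lemma mixpow_sub n W t X Y i l :
  mixpow n W t (fun i l => X i l - Y i l) i l = mixpow n W t X i l - mixpow n W t Y i l.
Proof. revert i l. induction t; intros i l; simpl; auto. unfold mix.
 rewrite (rsum_ext n _ (fun j => 1 * (W i j * mixpow n W t X j l) + (-1) * (W i j * mixpow n W t Y j l))).
 rewrite rsum_lin. ring. intros j _. rewrite IHt. ring. Qed.

Lemma snorm_SN n p X : snorm n p X = sqrt (SN n p X).
Proof. reflexivity. Qed.

Lemma snorm_mixpow n p W t X : mixing_matrix n W -> snorm n p (mixpow n W t X) <= snorm n p X.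
Proof. intros. rewrite !snorm_SN. apply sqrt_le_1_alt, mixpow_nonexp; auto. Qed.


Theorem lemma3
  (n p : nat) (W : nat -> nat -> R)
  (f : nat -> vec -> R) (g : nat -> vec -> vec)
  (mu Lf : nat -> R) (ustar : nat -> vec) (s0 : vec) (alpha : R)
  (tk : nat -> nat) :
  (1 <= n)%nat ->
  mixing_matrix n W ->
  (forall i, (i < n)%nat -> is_gradient p (f i) (g i)) ->
  (forall i, (i < n)%nat -> 0 < mu i /\ strongly_convex p (mu i) (f i)) ->
  (forall i, (i < n)%nat -> 0 < Lf i /\ lipschitz_grad p (Lf i) (g i)) ->
  (forall i, (i < n)%nat -> forall z : vec, f i (ustar i) <= f i z) ->
  0 < alpha -> alpha < 1 / rmaxn n Lf ->
  (forall k, (1 <= tk k)%nat) ->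
  let gamma := rminn n (fun i => mu i * Lf i / (mu i + Lf i)) in
  let nu := 2 * alpha * gamma in
  let D := snorm n p (ssub (near_dgd_y n W alpha g tk s0 0) ustar)
           + (nu + 4) / nu * snorm n p ustar in
  forall k, (1 <= k)%nat ->
    snorm n p (near_dgd_x n W alpha g tk s0 k) <= D /\
    snorm n p (near_dgd_y n W alpha g tk s0 k) <= D.
Proof.
 intros Hn HW Hg Hs Hl Hmin Ha HaL Htk gamma nu D k _.
 set (F := fun i => mu i * Lf i / (mu i + Lf i)) in gamma.
 assert (HF: forall i, (i < n)%nat -> 0 < F i).
 { intros i Hi. destruct (Hs i Hi), (Hl i Hi). unfold F. apply Rdiv_lt_0_compat; nra. }
 assert (Hgam: 0 < gamma). { unfold gamma, rminn. apply rmin_upto_pos. intros; apply HF; lia. }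
 assert (Hgi: forall i, (i < n)%nat -> gamma <= F i). { intros. unfold gamma, rminn. apply rmin_upto_le. lia. }
 assert (HLi: forall i, (i < n)%nat -> Lf i <= rmaxn n Lf). { intros. unfold rmaxn. apply rmax_upto_ge. lia. }
 assert (HaLi: forall i, (i < n)%nat -> alpha * Lf i < 1).
 { intros i Hi. pose proof (HLi i Hi). destruct (Hl i Hi). assert (0 < rmaxn n Lf) by lra.
   apply Rmult_lt_compat_r with (r := rmaxn n Lf) in HaL; auto.
   replace (1 / rmaxn n Lf * rmaxn n Lf) with 1 in HaL by (field; lra). nra. }
 assert (Hnu: 0 < nu) by (unfold nu; nra).
 assert (Hnu2: nu < 2).
 { pose proof (Hgi 0%nat ltac:(lia)). pose proof (HaLi 0%nat ltac:(lia)).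
   destruct (Hs 0%nat ltac:(lia)), (Hl 0%nat ltac:(lia)).
   assert (F 0%nat < Lf 0%nat).
   { unfold F. apply Rmult_lt_reg_r with (mu 0%nat + Lf 0%nat); [lra|].
     replace (mu 0%nat * Lf 0%nat / (mu 0%nat + Lf 0%nat) * (mu 0%nat + Lf 0%nat)) with (mu 0%nat * Lf 0%nat) by (field; lra). nra. }
   unfold nu. nra. }
 set (c := Rmax 0 (1 - nu)). set (rho := sqrt c).
 assert (Hrho: 0 <= rho) by apply sqrt_pos.
 assert (Hrho2: rho <= 1 - nu / 2).
 { unfold rho, c. destruct (Rle_lt_dec 0 (1 - nu)).
   - rewrite Rmax_right by auto. rewrite <- (sqrt_square (1 - nu/2)) by lra. apply sqrt_le_1_alt. nra.
   - rewrite Rmax_left by lra. rewrite sqrt_0. lra. }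
 set (Y := near_dgd_y n W alpha g tk s0). set (X := fun k => near_dgd_x n W alpha g tk s0 k).
 set (U := snorm n p ustar). set (e := fun k => snorm n p (ssub (Y k) ustar)).
 assert (HU: 0 <= U) by apply sqrt_pos.
 assert (He: forall k, 0 <= e k) by (intros; apply sqrt_pos).
 assert (S1: forall k, e (S k) <= rho * snorm n p (ssub (X k) ustar)).
 { intros j. unfold e. rewrite !snorm_SN. unfold rho. rewrite <- sqrt_mult by (try apply Rmax_l; apply rsum_nonneg; intros; apply dot_nonneg).
   apply sqrt_le_1_alt. unfold SN, ssub. rewrite <- rsum_scal. apply rsum_le. intros i Hi.
   destruct (Hs i Hi) as [Hmu Hsc]. destruct (Hl i Hi) as [HL Hlip].
   pose proof (contraction p (mu i) (Lf i) (f i) (g i) (Hg i Hi) Hsc Hmu HL Hlip (ustar i) (X j i) alpha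
     (Hmin i Hi) Ha (HaLi i Hi)) as C.
   change (vsub (Y (S j) i) (ustar i)) with (vsub (fun l => X j i l - alpha * g i (X j i) l) (ustar i)).
   eapply Rle_trans; [apply C|]. apply Rmult_le_compat_r; [apply dot_nonneg|].
   pose proof (Hgi i Hi). unfold F in H. unfold c. eapply Rle_trans; [|apply Rmax_r]. unfold nu. nra. }
 assert (S2: forall k, snorm n p (ssub (X k) ustar) <= e k + 2 * U).
 { intros j. 
   assert (E: ssub (X j) ustar = fun i l => mixpow n W (tk j) (fun i l => Y j i l - ustar i l) i l
                 + (fun i l => mixpow n W (tk j) ustar i l + - ustar i l) i l).
   { apply functional_extensionality; intro i. apply functional_extensionality; intro l.
     rewrite mixpow_sub. unfold ssub, vsub, X, near_dgd_x. fold Y. ring. }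
   rewrite E. eapply Rle_trans; [apply snorm_triangle|].
   pose proof (snorm_mixpow n p W (tk j) (fun i l => Y j i l - ustar i l) HW).
   pose proof (snorm_triangle n p (mixpow n W (tk j) ustar) (fun i l => - ustar i l)).
   rewrite snorm_opp in H0. pose proof (snorm_mixpow n p W (tk j) ustar HW).
   change (fun i l => Y j i l - ustar i l) with (ssub (Y j) ustar) in H. fold (e j) in H. fold U in H0, H1. change (fun i l => Y j i l - ustar i l) with (ssub (Y j) ustar). lra. }
 assert (S3: forall k, e k <= e 0%nat + 4 / nu * U).
 { induction k0.
   - assert (0 <= 4 / nu * U) by (apply Rmult_le_pos; [apply Rlt_le, Rdiv_lt_0_compat|]; lra). lra.
   - eapply Rle_trans; [apply S1|]. 
     assert (snorm n p (ssub (X k0) ustar) <= e 0%nat + 4 / nu * U + 2 * U) by (pose proof (S2 k0); lra).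
     assert (rho * snorm n p (ssub (X k0) ustar) <= (1 - nu/2) * (e 0%nat + 4 / nu * U + 2 * U)).
     { apply Rmult_le_compat; auto. apply sqrt_pos. }
     replace ((1 - nu/2) * (e 0%nat + 4 / nu * U + 2 * U)) with
       (e 0%nat + 4 / nu * U - nu / 2 * e 0%nat - nu * U) in H0 by (field; lra).
     pose proof (He 0%nat). nra. }
 assert (HY: snorm n p (Y k) <= e k + U).
 { assert (E: Y k = fun i l => ssub (Y k) ustar i l + ustar i l).
   { apply functional_extensionality; intro i. apply functional_extensionality; intro l. unfold ssub, vsub. ring. }
   rewrite E at 1. apply snorm_triangle. }
 assert (HX: snorm n p (X k) <= snorm n p (Y k)) by apply snorm_mixpow, HW.
 assert (HD: e k + U <= D).
 { unfold D. fold Y. fold (e 0%nat). fold U. pose proof (S3 k).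
   replace ((nu + 4) / nu * U) with (U + 4 / nu * U) by (field; lra). lra. }
 split; lra.
Qed.
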